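(* Let $p$ be a prime, let $n\geq 1$ and $k\geq 1$ be integers, and let $q$ be an integer with $\gcd(q,p)=1$. Define $f:\{0,1,\dots,p^n-1\}\to\{0,1,\dots,p^n-1\}$ by $f(x)\equiv q^x \pmod{p^n}$, $0\leq f(x)<p^n$. Then the number of $k$-periodic points of $f$, i.e. the number of $x\in\{0,1,\dots,p^n-1\}$ with $f^{k}(x)=x$ (where $f^k$ is the $k$-fold iterate of $f$), is at most $(p-1)^k$. *)

(* Defs.v *)
From mathcomp Require Import all_boot all_order all_algebra.
Set Implicit Arguments. Unset Strict Implicit. Unset Printing Implicit Defensive.
Import GRing.Theory Num.Theory.
Local Open Scope ring_scope.

Definition powmod (q : int) (m : nat) (x : nat) : nat :=
  `|((q ^+ x) %% (m%:Z))%Z|%N.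

(* Main.v *)
Require Import Defs.
From mathcomp Require Import all_boot all_order all_algebra all_solvable.
Set Implicit Arguments. Unset Strict Implicit. Unset Printing Implicit Defensive.
Import GRing.Theory Num.Theory.

Lemma powmodE (q : int) m x : (0 < m)%N ->
  powmod q m x = (`|(q %% m%:Z)%Z|%N ^ x %% m)%N.
Proof.
move=> m0; rewrite /powmod.
have h0 : (0 <= (q %% m%:Z)%Z)%R by apply: modz_ge0; rewrite eqz_nat -lt0n.
rewrite -modzXm -[(q %% m%:Z)%Z]gez0_abs //.
rewrite -natz -natrX natz modz_nat !absz_nat.
by rewrite natz absz_nat.
Qed.

Lemma cop (q : int) p n : (0 < n)%N -> gcdz q p%:Z = 1%N -> coprime `|(q %% (p ^ n)%:Z)%Z|%N p.
Proof.
move=> n0 h.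
have : coprimez (q %% (p^n)%:Z)%Z (p^n)%:Z.
  rewrite /coprimez gcdz_modl. rewrite -natz natrX natz. apply: coprimezXr. by apply/eqP.
rewrite coprimezE absz_nat coprime_pexpr //.
Qed.
Lemma expmod Q d M x : Q ^ d = 1 %[mod M] -> Q ^ x = Q ^ (x %% d) %[mod M].
Proof.
move=> h; rewrite {1}(divn_eq x d) expnD [x %/ d * d]mulnC expnM -modnMml -modnXm h modnXm exp1n.
by rewrite modnMml mul1n.
Qed.

Lemma L1 p n j Q x y : prime p -> coprime Q p -> (j < n)%N ->
  x = y %[mod p.-1 * p ^ j] -> Q ^ x %% p ^ n = Q ^ y %% p ^ n %[mod p ^ j.+1].
Proof.
move=> pp cQ jn hxy.
have E : Q ^ (p.-1 * p ^ j) = 1 %[mod p ^ j.+1].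
  rewrite -[j in p ^ j]/(j.+1.-1) -totient_pfactor //.
  by apply: Euler_exp_totient; rewrite coprimeXr.
have dv : p ^ j.+1 %| p ^ n by rewrite dvdn_exp2l.
by rewrite !modn_dvdm // (expmod x E) (expmod y E) hxy.
Qed.

Lemma periodic (T : Type) (f : T -> T) k x : iter k f x = x ->
  forall a b, iter (a * k + b) f x = iter b f x.
Proof.
move=> h; elim=> [|a IH] b; first by rewrite mul0n.
by rewrite mulSn -addnA addnC iterD h.
Qed.

Lemma main_inj p n k Q x y : prime p -> coprime Q p -> (0 < k)%N ->
  let f := fun z => Q ^ z %% p ^ n in
  iter k f x = x -> iter k f y = y ->
  (forall i, (i < k)%N -> iter i f x = iter i f y %[mod p.-1]) ->
  x = y %[mod p ^ n].
Proof.
move=> pp cQ k0 f hx hy hi.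
have H1 i : iter i f x = iter i f y %[mod p.-1].
  by rewrite (divn_eq i k) !(periodic hx, periodic hy) hi // ltn_mod.
have cp j : coprime p.-1 (p ^ j).
  by apply: coprimeXr; rewrite -{2}(prednK (prime_gt0 pp)) coprimenS.
suff: forall j, (j <= n)%N -> forall i, iter i f x = iter i f y %[mod p ^ j].
  by move=> /(_ n (leqnn n) 0).
elim=> [|j IH] jn i; first by rewrite expn0 !modn1.
have ik : (1 * k + i = (k.-1 + i).+1)%N by rewrite mul1n -addSn prednK.
rewrite -(periodic hx 1 i) -(periodic hy 1 i) ik !iterS.
apply: L1 => //.
apply/eqP; rewrite chinese_remainder //; apply/andP; split; apply/eqP.
  exact: H1.
by apply: IH; apply: ltnW.
Qed.

Theorem corollary2 (p n k : nat) (q : int) :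
  prime p -> (1 <= n)%N -> (1 <= k)%N -> gcdz q (p%:Z) = 1%N ->
  (#|[set x : 'I_(p ^ n) | iter k (powmod q (p ^ n)) x == x]| <= (p.-1) ^ k)%N.
Proof.
move=> pp n0 k0 hg.
set Q := `|(q %% (p ^ n)%:Z)%Z|%N.
have cQ : coprime Q p by apply: cop.
have m0 : (0 < p ^ n)%N by rewrite expn_gt0 prime_gt0.
have fE : powmod q (p ^ n) =1 (fun z => (Q ^ z %% p ^ n)%N).
  by move=> z; rewrite powmodE.
have -> : [set x : 'I_(p ^ n) | iter k (powmod q (p ^ n)) x == x] =
   [set x : 'I_(p ^ n) | iter k (fun z => (Q ^ z %% p ^ n)%N) x == x].
  by apply/setP => x; rewrite !inE (eq_iter fE).
have p1 : (0 < p.-1)%N by rewrite -ltnS prednK ?prime_gt0 // prime_gt1.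
pose r (z : nat) : 'I_(p.-1) := Ordinal (ltn_pmod z p1).
pose g (x : 'I_(p ^ n)) : {ffun 'I_k -> 'I_(p.-1)} :=
  [ffun i : 'I_k => r (iter i (fun z => (Q ^ z %% p ^ n)%N) x)].
set P := [set x : 'I_(p ^ n) | _].
rewrite -(card_in_imset (f := g)).
  by apply: leq_trans (max_card _) _; rewrite card_ffun !card_ord.
move=> x y; rewrite !inE => /eqP hx /eqP hy /ffunP hxy.
apply/val_inj => /=.
rewrite -(modn_small (ltn_ord x)) -(modn_small (ltn_ord y)).
apply: (main_inj pp cQ k0 hx hy) => i ik.
by have := hxy (Ordinal ik); rewrite !ffunE => /(congr1 val).
Qed.
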